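(* Let $G$ be a graph with at least one isolated vertex such that $G\ne\widetilde G$. If $G$ has a minimum twin cover that is also a determining set for $G$, then for every $t\ge1$, \[\det(\mu_t(G))=(t+1)\det(G)+t-1.\]
   Context: All graphs are finite and simple. For a graph $G$ with $V(G)=\{v_1,\dots,v_n\}$ and an integer $t\ge1$, the generalized Mycielskian $\mu_t(G)$ has vertex set $\{u_i^s: 1\le i\le n,\ 0\le s\le t\}\cup\{w\}$, where $u_i^0$ is identified with $v_i$. Its edges are: $u_i^0u_j^0$ for each edge $v_iv_j$ of $G$; $u_i^su_j^{s+1}$ and $u_j^su_i^{s+1}$ for each edge $v_iv_j$ of $G$ and each $0\le s<t$; and $u_i^tw$ for all $1\le i\le n$. A set $S\subseteq V(G)$ is a determining set for $G$ if the only automorphism of $G$ fixing every vertex of $S$ is the identity; $\det(G)$ is the minimum size of a determining set. Two vertices are twins if they have the same open neighborhood; being twins is an equivalence relation on $V(G)$, and the twin quotient $\widetilde G$ has the equivalence classes as vertices, with two classes adjacent iff some members are adjacent in $G$ ($G\ne\widetilde G$ means $G$ has a pair of distinct twins). A minimum twin cover is a minimum-size vertex subset containing at least one vertex from every pair of distinct twins. *)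

(* Defs.v *)
From mathcomp Require Import all_boot all_order all_fingroup.
Set Implicit Arguments. Unset Strict Implicit. Unset Printing Implicit Defensive.

Section Graphs.
Variable T : finType.
Variable e : rel T.

Definition simple_graph := symmetric e /\ irreflexive e.

Definition is_aut (f : {perm T}) : bool :=
  [forall x, forall y, e (f x) (f y) == e x y].

Definition determining (S : {set T}) : bool :=
  [forall f : {perm T}, is_aut f ==> [forall x in S, f x == x] ==> (f == 1%g)].

(* det(G): minimum size of a determining set (setT is always determining) *)
Definition detG : nat :=
  \big[minn/#|T|]_(S : {set T} | determining S) #|S|.

Definition isolated (v : T) := forall u, ~~ e v u.

Definition twins (x y : T) := forall z, e x z = e y z.

(* G <> twin quotient: G has a pair of distinct twins *)
Definition has_distinct_twins := exists x y, x != y /\ twins x y.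

Definition twin_cover (S : {set T}) :=
  forall x y, x != y -> twins x y -> (x \in S) || (y \in S).

Definition min_twin_cover (S : {set T}) :=
  twin_cover S /\ forall S', twin_cover S' -> #|S| <= #|S'|.

(* generalized Mycielskian mu_t(G): vertex Some (v, s) is u_v^s (s <= t),
   None is the apex w. *)
Definition myc_rel (t : nat) : rel (option (T * 'I_t.+1)) :=
  fun a b =>
    match a, b with
    | Some (x, i), Some (y, j) =>
        [&& (i : nat) == 0, (j : nat) == 0 & e x y]
        || (e x y && (((j : nat) == i.+1) || ((i : nat) == j.+1)))
    | Some (_, i), None => (i : nat) == t
    | None, Some (_, j) => (j : nat) == t
    | None, None => false
    end.

End Graphs.

(* Main.v *)
Require Import Defs.
From mathcomp Require Import all_boot all_order all_fingroup zify.
From Stdlib Require Import Classical.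
Set Implicit Arguments. Unset Strict Implicit. Unset Printing Implicit Defensive.

Lemma bigmin_le_seq (I : eqType) (s : seq I) (P : pred I) (F : I -> nat) x0 j :
  j \in s -> P j -> \big[minn/x0]_(i <- s | P i) F i <= F j.
Proof.
elim: s => // a s IH; rewrite inE big_cons => /orP [/eqP<-|js] Pj.
  by rewrite Pj geq_minl.
case: ifP => _; last exact: IH.
by rewrite geq_min IH ?orbT.
Qed.

Section Gen.
Variables (U : finType) (r : rel U).

Lemma autP (f : {perm U}) : is_aut r f -> forall x y, r (f x) (f y) = r x y.
Proof. by move=> /forallP H x y; move: (H x) => /forallP /(_ y) /eqP. Qed.

Lemma aut_inv (f : {perm U}) : is_aut r f -> is_aut r f^-1.
Proof.
move=> Hf; apply/forallP=> x; apply/forallP=> y; apply/eqP.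
by rewrite -(autP Hf) !permKV.
Qed.

Lemma tperm_aut a b : symmetric r -> twins r a b -> is_aut r (tperm a b).
Proof.
move=> sym tw; apply/forallP=> x; apply/forallP=> y; apply/eqP.
have tw' : forall z, r z a = r z b by move=> z; rewrite sym tw sym.
case: (tpermP a b x) => [->|->|/eqP nxa /eqP nxb];
case: (tpermP a b y) => [->|->|/eqP nya /eqP nyb]; subst; idtac.
all: by rewrite ?tw ?tw'.
Qed.

Lemma det_twin_cover D : symmetric r -> determining r D -> twin_cover r D.
Proof.
move=> sym /forallP dD x y nxy tw; apply/negPn/negP; rewrite negb_or => /andP [hx hy].
move: (dD (tperm x y)); rewrite tperm_aut //= => /implyP H.
have : tperm x y == 1%g.
  apply: H; apply/forallP=> z; apply/implyP=> zD; apply/eqP.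
  rewrite tpermD //; apply/eqP=> E; subst z; by rewrite zD in hx hy.
move/eqP/permP/(_ x); rewrite tpermL perm1 => /eqP; by rewrite eq_sym (negbTE nxy).
Qed.

Lemma detG_le D : determining r D -> detG r <= #|D|.
Proof.
move=> dD; rewrite /detG; apply: bigmin_le_seq => //; exact: mem_index_enum.
Qed.

Lemma detG_ge k : (forall D, determining r D -> k <= #|D|) -> k <= detG r.
Proof.
move=> H; rewrite /detG; apply: (big_ind (fun m => k <= m)).
- rewrite -cardsT; apply: H; apply/forallP=> f; apply/implyP=> _; apply/implyP=> /forallP fx.
  by apply/eqP/permP=> x; rewrite perm1; apply/eqP; move: (fx x) => /implyP; apply; rewrite inE.
- by move=> a b ha hb; rewrite leq_min ha hb.
- by move=> D dD; apply: H.
Qed.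
End Gen.

Section Myc.
Variables (T : finType) (e : rel T) (t : nat).
Hypothesis sym : symmetric e.
Hypothesis ht : 0 < t.

Notation H := (@myc_rel T e t).
Notation V := (option (T * 'I_t.+1)).

Definition ni x := [exists u, e x u].

Lemma isoP x : isolated e x <-> ~~ ni x.
Proof.
split=> [iso|/existsPn h u]; last exact: h.
by apply/existsPn => u; apply: iso.
Qed.

Lemma nie x y : ~~ ni x -> e x y = false.
Proof. by move/existsPn/(_ y)/negbTE. Qed.

Lemma nie' x y : ~~ ni y -> e x y = false.
Proof. by move=> h; rewrite sym nie. Qed.

Lemma nieP x y : e x y -> ni x.
Proof. by move=> h; apply/existsP; exists y. Qed.

Lemma HE (x y : T) (i j : 'I_t.+1) : H (Some (x, i)) (Some (y, j)) =
  e x y && ([&& (i : nat) == 0 & (j : nat) == 0] || ((j : nat) == i.+1) || ((i : nat) == j.+1)).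
Proof. rewrite /=; case: (e x y) => /=; [by rewrite andbT orbA | by rewrite !andbF]. Qed.

Lemma HsymE : symmetric H.
Proof.
move=> [[x i]|] [[y j]|] //; rewrite !HE (sym y x); congr (_ && _).
by rewrite andbC orbAC -orbA [X in _ || X]orbC.
Qed.

Lemma twins_lift (x y : T) (s : 'I_t.+1) : twins e x y -> twins H (Some (x, s)) (Some (y, s)).
Proof. by move=> tw [[z j]|] //=; rewrite tw. Qed.

Lemma autV (f : {perm V}) a z : is_aut H f -> H (f a) z = H a (f^-1%g z).
Proof. by move=> Hf; rewrite -(autP Hf a) permKV. Qed.

Lemma invNone (f : {perm V}) : f None = None -> (f^-1)%g None = None.
Proof. by move=> h; rewrite -{1}h permK. Qed.

Definition succo (s : 'I_t.+1) (hs : s < t) : 'I_t.+1 := Ordinal (hs : s.+1 < t.+1).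

Lemma fix_w (f : {perm V}) (v0 x1 x2 : T) :
  isolated e v0 -> x1 != x2 -> is_aut H f -> f None = None.
Proof.
move=> /isoP iv0 nx Hf.
pose a : V := Some (v0, ord_max).
have nb : forall z, H (f a) z = (z == f None).
  move=> z; rewrite autV //.
  have -> : (z == f None) = ((f^-1)%g z == (None : V)).
    by apply/eqP/eqP => [->|<-]; rewrite ?permK ?permKV.
  rewrite /a; case: ((f^-1)%g z) => [[y j]|] //=; [have := nie y iv0; simpl=> -> | ]; by rewrite ?andbF ?eqxx.
case E: (f a) nb => [[x s]|] nb.
- case st: ((s : nat) == t).
    by move: (nb None) => /=; rewrite st => /esym /eqP.
  have hs : s < t by rewrite ltn_neqAle st -ltnS ltn_ord.
  exfalso.
  move: (nb (f None)); rewrite eqxx.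
  case: (f None) => [[y j]|]; last by rewrite /= st.
  rewrite HE => /andP [exy _].
  have h1 := nb (Some (y, succo hs)).
  rewrite HE exy /= eqxx orbT /= in h1.
  have h2 := nb (Some (y, inord s.-1)).
  have : H (Some (x, s)) (Some (y, inord s.-1)).
    rewrite HE exy inordK; last by rewrite (leq_ltn_trans (leq_pred _)) // ltnS ltnW.
    rewrite /=; case: (nat_of_ord s) => [|n] //=; by rewrite eqxx !orbT.
  rewrite h2 => /eqP E2; move/esym/eqP: h1; rewrite -E2 => [[]] /(congr1 val) /=.
  rewrite inordK; last by rewrite (leq_ltn_trans (leq_pred _)) // ltnS ltnW.
  lia.
- have g1 := nb (Some (x1, ord_max)); have g2 := nb (Some (x2, ord_max)).
  rewrite /= eqxx in g1 g2.
  move/esym/eqP: g2; rewrite -(eqP (esym g1)) => [[]] /eqP; by rewrite eq_sym (negbTE nx).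
Qed.


Lemma layer k : forall (g : {perm V}), is_aut H g -> g None = None ->
  forall (s : 'I_t.+1) (x : T), t - s = k -> ni x || (s == t :> nat) ->
  exists x', g (Some (x, s)) = Some (x', s).
Proof.
elim/ltn_ind: k => k IH g Hg gw s x hk hx.
case st: (s == t :> nat).
  have := autP Hg (Some (x, s)) None; rewrite gw /= st => h.
  case E: (g (Some (x, s))) h => [[x' j]|] //= /eqP jt.
  by exists x'; congr Some; congr pair; apply/val_inj; rewrite /= jt (eqP st).
rewrite st orbF in hx.
have hs : s < t by rewrite ltn_neqAle st -ltnS ltn_ord.
case/existsP: hx => y exy.
pose s1 := succo hs.
have hk1 : t - s1 < k by rewrite -hk /=; lia.
have hy : ni y by apply: (@nieP y x); rewrite sym.
have [y' gy] := IH _ hk1 g Hg gw s1 y erefl ltac:(by rewrite hy).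
have ab : H (Some (x, s)) (Some (y, s1)) by rewrite HE exy /= eqxx orbT.
have := autP Hg (Some (x, s)) (Some (y, s1)); rewrite ab gy.
case E: (g (Some (x, s))) => [[z j]|]; last first.
  by move: E; rewrite -gw => /perm_inj.
rewrite HE => /andP [ezy hj].
have : (j : nat) = s \/ (j : nat) = s.+2 by move: hj; rewrite /=; lia.
case=> [js|js2].
  by exists z; congr Some; congr pair; apply/val_inj.
have hk2 : t - j < k by rewrite -hk js2; move: (ltn_ord j); rewrite js2; lia.
have hz : ni z by apply: nieP ezy.
have [z'' gz] := IH _ hk2 _ (aut_inv Hg) (invNone gw) j z erefl ltac:(by rewrite hz).
move: gz; rewrite -E permK => [[_]] /(congr1 val) /=; lia.
Qed.


Lemma iso_twin x y : ~~ ni x -> ~~ ni y -> twins e x y.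
Proof. by move=> hx hy z; rewrite !nie. Qed.

Lemma det_D (S : {set T}) (D : {set V}) (vs x1 x2 : T) :
  twin_cover e S -> determining e S -> isolated e vs -> vs \notin S -> x1 != x2 ->
  (forall x s, x \in S -> Some (x, s) \in D) ->
  (forall s : 'I_t.+1, 0 < s < t -> Some (vs, s) \in D) ->
  determining H D.
Proof.
move=> tc dS /isoP ivs vsS nx SD vD.
apply/forallP => f; apply/implyP => Hf; apply/implyP => /forallP fD.
have fixD a : a \in D -> f a = a by move=> aD; move: (fD a) => /implyP /(_ aD) /eqP.
have fw : f None = None by apply: (@fix_w f vs x1 x2) => //; apply/isoP.
have lay (s : 'I_t.+1) x : ni x || (s == t :> nat) -> exists x', f (Some (x, s)) = Some (x', s).
  move=> h; exact: (@layer (t - s) f Hf fw s x erefl h).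
have inS x : ~~ ni x -> x != vs -> x \in S.
  move=> hx xv; have := tc x vs xv (iso_twin hx ivs); by rewrite (negbTE vsS) orbF.
have step (s : 'I_t.+1) (hs : s < t) x x' : (forall z, ni z -> f (Some (z, s)) = Some (z, s)) ->
    f (Some (x, succo hs)) = Some (x', succo hs) -> x' = x.
  move=> hz fx.
  have tw : twins e x x'.
    move=> z; case nz: (ni z); last by rewrite !nie' ?nz.
    have := autP Hf (Some (x, succo hs)) (Some (z, s)); rewrite fx hz // !HE /= eqxx !orbT !andbT.
    by move=> ->.
  case: (eqVneq x' x) => // nx'.
  have nxx : x != x' by rewrite eq_sym.
  case/orP: (tc x x' nxx tw) => [xS|x'S].
    by move: (fixD _ (SD x (succo hs) xS)); rewrite fx; case.
  by move: (fixD _ (SD x' (succo hs) x'S)); rewrite -{2}fx => /perm_inj; case.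
have lay0 x : ni x -> exists x', f (Some (x, ord0)) = Some (x', ord0) /\ ni x'.
  move=> nx0; have [x' fx] := lay ord0 x ltac:(by rewrite nx0).
  exists x'; split => //.
  case/existsP: (nx0) => y exy.
  have hy : ni y by apply: (@nieP y x); rewrite sym.
  have [y' fy] := lay ord0 y ltac:(by rewrite hy).
  have := autP Hf (Some (x, ord0)) (Some (y, ord0)); rewrite fx fy !HE /= !andbT exy.
  exact: nieP.
pose h x := if ni x then (if f (Some (x, ord0)) is Some p then p.1 else x) else x.
have hE x : ni x -> f (Some (x, ord0)) = Some (h x, ord0) /\ ni (h x).
  by move=> nx0; have [x' [fx nx']] := lay0 x nx0; rewrite /h nx0 fx.
have hI x : ~~ ni x -> h x = x by rewrite /h => /negbTE ->.
have hinj : injective h.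
  move=> a b; case na: (ni a); case nb: (ni b).
  - move=> hab; have [fa _] := hE a na; have [fb _] := hE b nb.
    by move: fa; rewrite hab -fb => /perm_inj; case.
  - rewrite (hI b) ?nb // => hab; have [_ nh] := hE a na; by rewrite hab nb in nh.
  - rewrite (hI a) ?na // => hab; have [_ nh] := hE b nb; by rewrite -hab na in nh.
  - by rewrite !hI ?na ?nb.
pose hp := perm hinj.
have hpA : is_aut e hp.
  apply/forallP => a; apply/forallP => b; apply/eqP; rewrite !permE.
  case na: (ni a); first case nb: (ni b).
  - have [fa _] := hE a na; have [fb _] := hE b nb.
    by have := autP Hf (Some (a, ord0)) (Some (b, ord0)); rewrite fa fb !HE /= !andbT.
  - by rewrite (hI b) ?nb // !nie' ?nb.
  - by rewrite hI ?na // !nie ?na.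
have hp1 : hp == 1%g.
  move: dS => /forallP /(_ hp) /implyP /(_ hpA) /implyP; apply.
  apply/forallP => x; apply/implyP => xS; rewrite permE; case nx0: (ni x); last by rewrite hI ?nx0.
  have [fx _] := hE x nx0; move: (fixD _ (SD x ord0 xS)); rewrite fx; by case=> ->.
have l0 x : ni x -> f (Some (x, ord0)) = Some (x, ord0).
  move=> nx0; have [fx _] := hE x nx0; move/eqP/permP: hp1 => /(_ x); rewrite permE perm1 => hx.
  by rewrite fx hx.
have alln n : forall (s : 'I_t.+1), (s : nat) = n -> forall x, ni x -> f (Some (x, s)) = Some (x, s).
  elim: n => [|n IHn] s sn x nx0.
    have -> : s = ord0 by apply/val_inj.
    exact: l0.
  have hn : n < t by rewrite -ltnS -sn ltn_ord.
  pose s0 : 'I_t.+1 := Ordinal (ltnW hn : n < t.+1).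
  have hs0 : s0 < t := hn.
  have -> : s = succo hs0 by apply/val_inj.
  have [x' fx] := lay (succo hs0) x ltac:(by rewrite nx0).
  by rewrite fx (step s0 hs0 x x' (IHn s0 erefl) fx).
apply/eqP/permP => [[[x s]|]]; rewrite perm1 //.
case nx0: (ni x); first exact: (alln _ s erefl).
case st: (s == t :> nat).
  have ht1 : t.-1 < t by rewrite ltn_predL.
  pose s0 : 'I_t.+1 := Ordinal (ltnW ht1 : t.-1 < t.+1).
  have hs0 : s0 < t := ht1.
  have -> : s = succo hs0 by apply/val_inj; rewrite /= (prednK ht) (eqP st).
  have [x' fx] := lay (succo hs0) x ltac:(by rewrite /= prednK // eqxx orbT).
  by rewrite fx (step s0 hs0 x x' (alln _ s0 erefl) fx).
have hs : s < t by rewrite ltn_neqAle st -ltnS ltn_ord.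
case: (eqVneq x vs) => [xv|xv]; last by rewrite fixD // SD // inS ?nx0.
subst x.
case s0: (s == 0 :> nat); last by rewrite fixD // vD // lt0n s0 hs.
pose a : V := Some (vs, s).
have nb z : H (f a) z = false.
  rewrite autV // /a; case: ((f^-1)%g z) => [[y j]|] /=; last by rewrite st.
  by rewrite (_ : e vs y = false) ?andbF //; apply: nie.
change (f a = a).
case E: (f a) nb => [[y j]|] nb; last by move: (nb (Some (vs, ord_max))) => /=; rewrite eqxx.
case jt: (j == t :> nat); first by move: (nb None) => /=; rewrite jt.
have hj : j < t by rewrite ltn_neqAle jt -ltnS ltn_ord.
case ny: (ni y).
  case/existsP: ny => y2 ey; move: (nb (Some (y2, succo hj))); by rewrite HE ey /= eqxx orbT.
have cD : Some (y, j) \in D \/ Some (y, j) = a.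
  case: (eqVneq y vs) => [->|yv]; last by left; rewrite SD // inS ?ny.
  case j0: (j == 0 :> nat).
    by right; rewrite /a; congr Some; congr pair; apply/val_inj; rewrite /= (eqP j0) (eqP s0).
  by left; rewrite vD // lt0n j0 hj.
case: cD => [cD|->] //.
apply: (@perm_inj _ f); by rewrite fixD // E.
Qed.

End Myc.

Lemma cnt_neq n s0 : s0 < n -> \sum_(i < n) ((i : nat) != s0 : nat) = n.-1.
Proof.
move=> h; rewrite (bigD1 (Ordinal h)) //= eqxx add0n.
rewrite (eq_bigr (fun _ => 1)); last by move=> i; rewrite -val_eqE /= => ->.
by rewrite sum1dep_card cardsE cardC1 card_ord.
Qed.

Section Cover.
Variables (T : finType) (e : rel T).

Lemma iso_cover (A : {set T}) v0 : twin_cover e A -> isolated e v0 ->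
  (forall v, isolated e v -> v \in A) -> twin_cover e (A :\ v0).
Proof.
move=> tc iv allA x y nxy tw; rewrite !in_setD1.
case: (eqVneq x v0) => [xv|xv]; case: (eqVneq y v0) => [yv|yv] /=.
- by subst; rewrite eqxx in nxy.
- by rewrite allA // => u; rewrite -tw xv; apply: iv.
- by rewrite allA // => u; rewrite tw yv; apply: iv.
- exact: tc.
Qed.
End Cover.

Theorem mainTheorem7 (T : finType) (e : rel T) :
  simple_graph e ->
  (exists v : T, isolated e v) ->
  has_distinct_twins e ->
  (exists S : {set T}, min_twin_cover e S /\ determining e S) ->
  forall t : nat, 1 <= t ->
    detG (@myc_rel T e t) = (t + 1) * detG e + t - 1.
Proof.
move=> [sym irr] [v0 iv0] [x1 [x2 [nx tw12]]] [S [[tcS minS] dS]] t ht.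
have hdG : detG e = #|S|.
  apply/eqP; rewrite eqn_leq detG_le //=; apply: detG_ge => D dD; apply: minS.
  exact: det_twin_cover.
have [vs [ivs vsS]] : exists vs, isolated e vs /\ vs \notin S.
  case: (boolP (v0 \in S)) => v0S; last by exists v0.
  apply: NNPP => Hn.
  have allS : forall v, isolated e v -> v \in S.
    move=> v iv; apply/negPn/negP => vS; apply: Hn; by exists v.
  have := minS _ (iso_cover tcS iv0 allS).
  by rewrite (cardsD1 v0 S) v0S add1n ltnn.
pose D : {set option (T * 'I_t.+1)} :=
  [set Some p | p in setX S setT] :|: [set Some (vs, inord k.+1) | k : 'I_t.-1 in [set: 'I_t.-1]].
have SD x (s : 'I_t.+1) : x \in S -> Some (x, s) \in D.
  by move=> xS; rewrite in_setU; apply/orP; left; apply/imsetP; exists (x, s); rewrite ?inE ?xS.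
have vD (s : 'I_t.+1) : 0 < s < t -> Some (vs, s) \in D.
  case/andP=> s0 st; rewrite in_setU; apply/orP; right; apply/imsetP.
  have hk : s.-1 < t.-1 by lia.
  exists (Ordinal hk) => //; congr Some; congr pair; apply/val_inj.
  rewrite /= inordK prednK //; lia.
have dD := det_D sym ht tcS dS ivs vsS nx SD vD.
have cardD : #|D| <= (t + 1) * #|S| + t - 1.
  rewrite cardsU (leq_trans (leq_subr _ _)) //.
  have c1 := leq_imset_card (fun p : T * 'I_t.+1 => Some p) (setX S setT).
  have c2 := leq_imset_card (fun k : 'I_t.-1 => Some (vs, inord k.+1 : 'I_t.+1)) [set: 'I_t.-1].
  rewrite cardsX cardsT card_ord in c1; rewrite cardsT card_ord in c2.
  apply: leq_trans (leq_add c1 c2) _; lia.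
have lb : forall D', determining (@myc_rel T e t) D' -> (t + 1) * #|S| + t - 1 <= #|D'|.
  move=> D' dD'.
  have tcD := det_twin_cover (HsymE sym) dD'.
  pose Ds (s : 'I_t.+1) := [set x | Some (x, s) \in D'].
  have tcs s : twin_cover e (Ds s).
    move=> x y nxy tw; rewrite !inE; apply: tcD (twins_lift s tw).
    by apply: contra nxy => /eqP [->].
  have hs s : #|S| <= #|Ds s| by apply: minS.
  have Hiso v (s : 'I_t.+1) z : isolated e v -> s < t -> @myc_rel T e t (Some (v, s)) z = false.
    move=> /isoP iv st; case: z => [[y j]|] /=; last by rewrite ltn_eqF.
    by rewrite (_ : e v y = false) ?andbF //; apply: nie.
  have [s0 [s0t hI]] : exists s0, s0 < t /\ forall s : 'I_t.+1, s < t -> (s : nat) != s0 ->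
      forall v, isolated e v -> v \in Ds s.
    case: (classic (exists (s : 'I_t.+1) v, [/\ s < t, isolated e v & v \notin Ds s])) =>
      [[s1 [v1 [s1t iv1 v1n]]]|Hn].
      exists s1; split => // s st ss1 v iv; apply/negPn/negP => vn.
      have twv : twins (@myc_rel T e t) (Some (v1, s1)) (Some (v, s)) by move=> z; rewrite !Hiso.
      have nn : Some (v1, s1) != Some (v, s).
        by apply/eqP => -[_ E]; move: ss1; rewrite E eqxx.
      have := tcD _ _ nn twv; rewrite inE in v1n; rewrite inE in vn.
      by rewrite (negbTE v1n) (negbTE vn).
    exists 0; split => // s st _ v iv; apply/negPn/negP => vn; apply: Hn; by exists s, v.
  have hb (s : 'I_t.+1) : s < t -> (s : nat) != s0 -> #|S|.+1 <= #|Ds s|.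
    move=> st ss0.
    have := minS _ (iso_cover (tcs s) iv0 (hI s st ss0)).
    rewrite (cardsD1 v0 (Ds s)) (hI s st ss0 v0 iv0); lia.
  have cardP : \sum_(s < t.+1) #|Ds s| <= #|D'|.
    pose P := [set p : T * 'I_t.+1 | Some p \in D'].
    have -> : \sum_(s < t.+1) #|Ds s| = #|P|.
      symmetry; rewrite -sum1_card big_mkcond /=.
      rewrite [RHS](eq_bigr (fun s => \sum_(x : T) (if Some (x, s) \in D' then 1 else 0))); last first.
        by move=> s _; rewrite -sum1_card big_mkcond /=; apply: eq_bigr => x _; rewrite inE.
      rewrite [RHS]exchange_big pair_big /=; apply: eq_bigr => [[x s]] _; by rewrite inE.
    rewrite -(card_imset _ (@Some_inj _)); apply: subset_leq_card; apply/subsetP => a.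
    by case/imsetP => p; rewrite inE => pD ->.
  have sumb : \sum_(s < t.+1) (#|S| + ((s < t) && ((s : nat) != s0))) <= \sum_(s < t.+1) #|Ds s|.
    apply: leq_sum => s _.
    case/boolP: ((s < t) && ((s : nat) != s0)) => [/andP [st ss0]|_].
      by rewrite addn1 hb.
    by rewrite addn0 hs.
  rewrite big_split /= sum_nat_const card_ord big_ord_recr /= ltnn andFb addn0 in sumb.
  rewrite (eq_bigr (fun i : 'I_t => ((i : nat) != s0 : nat))) in sumb; last by move=> i _; rewrite ltn_ord.
  rewrite cnt_neq // in sumb.
  apply: leq_trans (leq_trans sumb cardP); lia.
rewrite hdG; apply/eqP; rewrite eqn_leq; apply/andP; split.
  exact: leq_trans (detG_le dD) cardD.
by apply: detG_ge => D' dD'; exact: lb.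
Qed.
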